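(* Assume the setting described in the context, let $\delta=\sum_{k=1}^{L-1}\ell_k(\ell_{k-1}+1)$, let $\theta=(\theta_j)_{j\in\mathbb N\cap[0,\delta]}$ be a function from $\mathbb N\cap[0,\delta]$ to $\mathbb R$, and let $\mathbb L\colon\mathbb R^{\ell_L(\ell_{L-1}+1)}\to\mathbb R$ satisfy for all $v=(v_1,\dots,v_{\ell_L(\ell_{L-1}+1)})$ that $\mathbb L(v)=\mathcal L_\infty(\theta_1,\theta_2,\dots,\theta_\delta,v_1,v_2,\dots,v_{\ell_L(\ell_{L-1}+1)})$. Then for all $v,w\in\mathbb R^{\ell_L(\ell_{L-1}+1)}$, $\lambda\in[0,1]$ it holds that $\mathbb L(\lambda v+(1-\lambda)w)\le\lambda\mathbb L(v)+(1-\lambda)\mathbb L(w)$.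
   Context: Setting. Let $L,\mathfrak d\in\mathbb N=\{1,2,\dots\}$, $(\ell_k)_{k\in\mathbb N_0}\subseteq\mathbb N$, $a\in\mathbb R$, $b\in(a,\infty)$ with $\mathfrak d=\sum_{k=1}^L\ell_k(\ell_{k-1}+1)$; let $\mathbf d_k=\sum_{h=1}^k\ell_h(\ell_{h-1}+1)$ for $k\in\mathbb N_0$. For $\theta=(\theta_1,\dots,\theta_{\mathfrak d})\in\mathbb R^{\mathfrak d}$, $k\in\{1,\dots,L\}$, $i\in\{1,\dots,\ell_k\}$, $j\in\{1,\dots,\ell_{k-1}\}$ let $\mathfrak w^{k,\theta}_{i,j}=\theta_{(i-1)\ell_{k-1}+j+\mathbf d_{k-1}}$ and $\mathfrak b^{k,\theta}_i=\theta_{\ell_k\ell_{k-1}+i+\mathbf d_{k-1}}$, let $\mathfrak w^{k,\theta}=(\mathfrak w^{k,\theta}_{i,j})_{i,j}\in\mathbb R^{\ell_k\times\ell_{k-1}}$, $\mathfrak b^{k,\theta}=(\mathfrak b^{k,\theta}_1,\dots,\mathfrak b^{k,\theta}_{\ell_k})\in\mathbb R^{\ell_k}$, and $\mathcal A^\theta_k(x)=\mathfrak b^{k,\theta}+\mathfrak w^{k,\theta}x$. Let $\mathfrak M_\infty(x_1,\dots,x_n)=(\max\{x_1,0\},\dots,\max\{x_n,0\})$ and $\|\cdot\|$ the Euclidean norm. Define $\mathcal N^{k,\theta}_\infty\colon\mathbb R^{\ell_0}\to\mathbb R^{\ell_k}$, $k\in\{1,\dots,L\}$, by $\mathcal N^{1,\theta}_\infty=\mathcal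 A^\theta_1$ and $\mathcal N^{k+1,\theta}_\infty(x)=\mathcal A^\theta_{k+1}(\mathfrak M_\infty(\mathcal N^{k,\theta}_\infty(x)))$. Let $\mu$ be a measure on the Borel $\sigma$-algebra of $[a,b]^{\ell_0}$ with $\mu([a,b]^{\ell_0})\in\mathbb R$, let $f\colon[a,b]^{\ell_0}\to\mathbb R^{\ell_L}$ be measurable, and let $\mathcal L_\infty\colon\mathbb R^{\mathfrak d}\to\mathbb R$, $\mathcal L_\infty(\theta)=\int_{[a,b]^{\ell_0}}\|\mathcal N^{L,\theta}_\infty(x)-f(x)\|^2\,\mu(dx)$ (these integrals are real numbers as part of the setting). *)

(* Defs.v *)
From HB Require Import structures.
From mathcomp Require Import all_boot all_order all_algebra.
From mathcomp Require Import all_classical all_reals all_analysis.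
Set Implicit Arguments. Unset Strict Implicit. Unset Printing Implicit Defensive.
Import Order.TTheory GRing.Theory Num.Theory.
Local Open Scope ring_scope.

(* Conventions: parameter indices are 0-based (paper index j <-> Rocq j-1).   *)

Definition dsum (l : nat -> nat) (k : nat) : nat :=
  (\sum_(1 <= h < k.+1) l h * (l h.-1 + 1))%N.

(* k-th entry (0-based) of a row vector, 0 outside the range *)
Definition vat (R : realType) (n : nat) (v : 'rV[R]_n) (k : nat) : R :=
  if @insub nat (fun i => i < n)%N 'I_n k is Some i then v 0 i else 0.

Definition affine (R : realType) (l : nat -> nat) (th : nat -> R) (k : nat)
    (x : 'cV[R]_(l k)) : 'cV[R]_(l k.+1) :=
  \col_(i < l k.+1)
    (th (l k.+1 * l k + i + dsum l k)%N
     + \sum_(j < l k) th (i * l k + j + dsum l k)%N * x j 0).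

Definition relu (R : realType) (n : nat) (x : 'cV[R]_n) : 'cV[R]_n :=
  \col_i Num.max (x i 0) 0.

Fixpoint netN (R : realType) (l : nat -> nat) (th : nat -> R) (k : nat)
    (x : 'cV[R]_(l 0)) : 'cV[R]_(l k) :=
  match k with
  | 0 => x
  | k'.+1 => @affine R l th k'
      (if k' == 0%N then @netN R l th k' x else relu (@netN R l th k' x))
  end.

Definition sqnorm (R : realType) (n : nat) (y : 'cV[R]_n) : R :=
  \sum_(i < n) y i 0 ^+ 2.

(* the cube [a,b]^{l0} inside R^{l0} = l0.-tuple R (product = Borel sigma-algebra) *)
Definition cube (R : realType) (n : nat) (a b : R) : set (n.-tuple R) :=
  [set x | forall i : 'I_n, a <= tnth x i <= b].

Definition colv (R : realType) (n : nat) (x : n.-tuple R) : 'cV[R]_n :=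
  \col_i tnth x i.

Definition loss_int (R : realType) (l : nat -> nat) (L : nat) (a b : R)
    (mu : {measure set ((l 0).-tuple R) -> \bar R})
    (f : (l 0).-tuple R -> 'cV[R]_(l L)) (th : 'rV[R]_(dsum l L)) : \bar R :=
  (\int[mu]_(x in cube a b) (sqnorm (@netN R l (vat th) L (colv x) - f x))%:E)%E.

Definition Linf (R : realType) (l : nat -> nat) (L : nat) (a b : R)
    (mu : {measure set ((l 0).-tuple R) -> \bar R})
    (f : (l 0).-tuple R -> 'cV[R]_(l L)) (th : 'rV[R]_(dsum l L)) : R :=
  fine (loss_int a b mu f th).

Definition concat_params (R : realType) (l : nat -> nat) (L : nat)
    (th : 'rV[R]_(dsum l L.-1)) (v : 'rV[R]_(l L * (l L.-1 + 1))) :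
    'rV[R]_(dsum l L) :=
  \row_(i < dsum l L)
    (if (i < dsum l L.-1)%N then vat th i else vat v (i - dsum l L.-1)).

(* Main.v *)
Require Import Defs.
From HB Require Import structures.
From mathcomp Require Import all_boot all_order all_algebra.
From mathcomp Require Import all_classical all_reals all_analysis.
From mathcomp Require Import measurable_realfun.
From mathcomp Require Import zify ring lra.
Import Order.TTheory GRing.Theory Num.Theory.
Local Open Scope ring_scope.
Local Open Scope classical_set_scope.

Lemma dsumS l k : dsum l k.+1 = (dsum l k + l k.+1 * (l k + 1))%N.
Proof. by rewrite /dsum big_nat_recr. Qed.

Lemma netN_ext (R : realType) l k (p q : nat -> R) x :
  (forall j, (j < dsum l k)%N -> p j = q j) -> @netN R l p k x = @netN R l q k x.
Proof.
elim: k => [//|k IH] H /=.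
have -> : @netN R l p k x = @netN R l q k x.
  by apply: IH => j Hj; apply: H; rewrite dsumS; lia.
apply/matrixP => i j; rewrite !mxE.
have Hi := ltn_ord i.
rewrite H; last by rewrite dsumS; lia.
congr (_ + _); apply: eq_bigr => m _; rewrite H //.
have Hm := ltn_ord m. rewrite dsumS.
have : (i * l k + m < l k.+1 * l k)%N.
  have : (i.+1 * l k <= l k.+1 * l k)%N by apply: leq_mul.
  rewrite mulSn; lia.
lia.
Qed.

Lemma affine_lin (R : realType) l k (p q : nat -> R) lam y :
  @affine R l (fun j => lam * p j + (1 - lam) * q j) k y
  = lam *: @affine R l p k y + (1 - lam) *: @affine R l q k y.
Proof.
apply/matrixP => i j; rewrite !mxE.
under eq_bigr do rewrite mulrDl.
rewrite big_split /= !mulrDr !mulr_sumr.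
under [X in _ + (X + _) = _]eq_bigr do rewrite -mulrA.
under [X in _ + (_ + X) = _]eq_bigr do rewrite -mulrA.
ring.
Qed.

Lemma netN_comb (R : realType) l k (p q : nat -> R) lam x :
  (forall j, (j < dsum l k)%N -> p j = q j) ->
  @netN R l (fun j => lam * p j + (1 - lam) * q j) k.+1 x
  = lam *: @netN R l p k.+1 x + (1 - lam) *: @netN R l q k.+1 x.
Proof.
move=> H /=.
have E1 : @netN R l (fun j => lam * p j + (1 - lam) * q j) k x = @netN R l p k x.
  by apply: netN_ext => j Hj; rewrite H //; ring.
have E2 : @netN R l q k x = @netN R l p k x.
  by apply: netN_ext => j Hj; rewrite H.
by rewrite E1 E2 affine_lin.
Qed.

Lemma vat_comb (R : realType) n (v w : 'rV[R]_n) lam k :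
  vat (lam *: v + (1 - lam) *: w) k = lam * vat v k + (1 - lam) * vat w k.
Proof.
rewrite /vat; case: insubP => [i _ _|_]; first by rewrite !mxE.
by rewrite !mulr0 addr0.
Qed.

Lemma vat_concat (R : realType) l L (th : 'rV[R]_(dsum l L.-1)) v k :
  vat (concat_params th v) k =
  if (k < dsum l L)%N then (if (k < dsum l L.-1)%N then vat th k
     else vat v (k - dsum l L.-1)) else 0.
Proof.
rewrite /vat; case: insubP => [i Hi Ei|Hk]; first by rewrite mxE Ei Hi.
by rewrite (negbTE Hk).
Qed.

Lemma sq_convex (R : realType) (lam x y : R) : 0 <= lam <= 1 ->
  (lam * x + (1 - lam) * y) ^+ 2 <= lam * x ^+ 2 + (1 - lam) * y ^+ 2.
Proof.
move=> /andP[h0 h1].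
have : 0 <= lam * (1 - lam) * (x - y) ^+ 2.
  by apply: mulr_ge0; [apply: mulr_ge0; lra | apply: sqr_ge0].
move=> H; rewrite -subr_ge0.
have -> : lam * x ^+ 2 + (1 - lam) * y ^+ 2 - (lam * x + (1 - lam) * y) ^+ 2
  = lam * (1 - lam) * (x - y) ^+ 2 by ring.
exact: H.
Qed.

Lemma sqnorm_convex (R : realType) n (A B C : 'cV[R]_n) lam : 0 <= lam <= 1 ->
  sqnorm (lam *: A + (1 - lam) *: B - C) <=
  lam * sqnorm (A - C) + (1 - lam) * sqnorm (B - C).
Proof.
move=> hl; rewrite /sqnorm !mulr_sumr -big_split /=.
apply: ler_sum => i _; rewrite !mxE.
have -> : lam * A i 0 + (1 - lam) * B i 0 - C i 0
  = lam * (A i 0 - C i 0) + (1 - lam) * (B i 0 - C i 0) by ring.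
exact: sq_convex.
Qed.

Lemma netN_meas (R : realType) l (p : nat -> R) k (i : 'I_(l k)) :
  measurable_fun setT (fun x : (l 0).-tuple R => @netN R l p k (colv x) i 0).
Proof.
elim: k i => [|k IH] i /=.
  rewrite /colv; under eq_fun do rewrite mxE.
  exact: measurable_tnth.
under eq_fun do rewrite mxE.
apply: measurable_funD => //.
apply: measurable_sum => j.
apply: measurable_funM => //.
case: (k == 0%N) => //.
rewrite /relu; under eq_fun do rewrite mxE.
exact: measurable_maxr.
Qed.

Lemma cube_meas (R : realType) n (a b : R) : measurable (@cube R n a b).
Proof.
have -> : cube a b = \bigcap_(i in [set: 'I_n]) ((fun x : n.-tuple R => tnth x i) @^-1` `[a, b]).
  apply/seteqP; split => x /=.
    by move=> H i _ /=; rewrite in_itv /= H.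
  by move=> H i; have := H i I; rewrite /= in_itv.
apply: fin_bigcap_measurable => // i _.
rewrite -[X in measurable X]setTI.
exact: measurable_tnth.
Qed.

Lemma integrand_meas (R : realType) l L (a b : R) (p : nat -> R)
  (f : (l 0).-tuple R -> 'cV[R]_(l L)) :
  (forall j : 'I_(l L), measurable_fun (cube a b) (fun x => f x j 0)) ->
  measurable_fun (cube a b)
    (fun x => (sqnorm (@netN R l p L (colv x) - f x))%:E).
Proof.
move=> mf; apply/measurable_EFinP; rewrite /sqnorm.
apply: measurable_sum => i.
apply: measurable_funX.
under eq_fun do rewrite !mxE.
apply: measurable_funB; last exact: mf.
have H1 := @netN_meas R l p L i.
have H2 := measurable_funS measurableT (@subsetT _ (cube a b)) H1.
exact: H2.
Qed.

Theorem proposition2p15 (R : realType) (L : nat) (l : nat -> nat) (a b : R)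
  (mu : {measure set ((l 0).-tuple R) -> \bar R})
  (f : (l 0).-tuple R -> 'cV[R]_(l L))
  (th : 'rV[R]_(dsum l L.-1))
  (LL : 'rV[R]_(l L * (l L.-1 + 1)) -> R) :
  (0 < L)%N ->
  (forall k, (0 < l k)%N) ->
  a < b ->
  (mu (cube a b) < +oo)%E ->
  (forall j : 'I_(l L), measurable_fun (cube a b) (fun x => f x j 0)) ->
  (forall p : 'rV[R]_(dsum l L), (loss_int a b mu f p < +oo)%E) ->
  (forall v, LL v = Linf a b mu f (concat_params th v)) ->
  forall (v w : 'rV[R]_(l L * (l L.-1 + 1))) (lam : R),
    0 <= lam <= 1 ->
    LL (lam *: v + (1 - lam) *: w) <= lam * LL v + (1 - lam) * LL w.
Proof.
case: L f th LL => [|L'] f th LL HL; first by rewrite ltnn in HL.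
move=> hl _ _ mf Hfin HLL v w lam hlam.
have Hfv := Hfin (concat_params th v).
have Hfw := Hfin (concat_params th w).
have Hfl := Hfin (concat_params th (lam *: v + (1 - lam) *: w)).
rewrite !HLL /Linf.
move: Hfv Hfw Hfl; rewrite /loss_int.
set Pv := vat (concat_params th v).
set Pw := vat (concat_params th w).
have Hagree : forall j, (j < dsum l L')%N -> Pv j = Pw j.
  move=> j hj; rewrite /Pv /Pw !vat_concat /=.
  have -> : (j < dsum l L'.+1)%N by rewrite dsumS; lia.
  by rewrite hj.
have -> : vat (concat_params th (lam *: v + (1 - lam) *: w))
    = fun j => lam * Pv j + (1 - lam) * Pw j.
  apply: funext => j; rewrite /Pv /Pw !vat_concat.
  case: ifP => _; last by ring.
  case: ifP => _; last by rewrite vat_comb.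
  by ring.
move=> Hfv Hfw Hfl.
have mD := @cube_meas R (l 0) a b.
set Iv := (\int[mu]_(x in _) _)%E in Hfv *.
set Iw := (\int[mu]_(x in _) _)%E in Hfw *.
set Il := (\int[mu]_(x in _) _)%E in Hfl *.
have [lam0 lam1] := andP hlam.
have Hle : (Il <= lam%:E * Iv + (1 - lam)%:E * Iw)%E.
  have -> : (lam%:E * Iv + (1 - lam)%:E * Iw)%E =
    (\int[mu]_(x in cube a b) ((lam * sqnorm (@netN R l Pv L'.+1 (colv x) - f x)
      + (1 - lam) * sqnorm (@netN R l Pw L'.+1 (colv x) - f x))%:E))%E.
    under eq_integral do rewrite EFinD !EFinM.
    rewrite ge0_integralD //; last 4 first.
    - by move=> x _; rewrite lee_fin; apply: mulr_ge0 => //; apply: sumr_ge0 => i _; exact: sqr_ge0.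
    - by apply: emeasurable_funM => //; exact: integrand_meas.
    - by move=> x _; rewrite lee_fin; apply: mulr_ge0; [lra|]; apply: sumr_ge0 => i _; exact: sqr_ge0.
    - by apply: emeasurable_funM => //; exact: integrand_meas.
    have Hm : forall p : nat -> R, measurable_fun (cube a b)
       (fun x => (sqnorm (@netN R l p L'.+1 (colv x) - f x))%:E).
      by move=> p; exact: integrand_meas.
    have Hp : forall p : nat -> R, forall x, cube a b x ->
       (0 <= (sqnorm (@netN R l p L'.+1 (colv x) - f x))%:E)%E.
      by move=> p x _; rewrite lee_fin; apply: sumr_ge0 => i _; exact: sqr_ge0.
    rewrite (@ge0_integralZl _ _ _ mu _ mD _ (Hm Pv) (lam%:E) (Hp Pv)); last by rewrite lee_fin.
    rewrite (@ge0_integralZl _ _ _ mu _ mD _ (Hm Pw) ((1-lam)%:E) (Hp Pw)) //; last by rewrite lee_fin; lra.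
  apply: ge0_le_integral => //.
  - by move=> x _; rewrite lee_fin; apply: sumr_ge0 => i _; exact: sqr_ge0.
  - exact: integrand_meas.
  - apply/measurable_EFinP; apply: measurable_funD; apply: measurable_funM => //;
    apply/measurable_EFinP; exact: integrand_meas.
  - move=> x _; rewrite lee_fin netN_comb //.
    exact: sqnorm_convex.
have fin0 : forall I : \bar R, (0 <= I)%E -> (I < +oo)%E -> I = (fine I)%:E.
  by move=> I I0 Ioo; rewrite fineK // ge0_fin_numE.
have I0 : forall p : nat -> R, (0 <= \int[mu]_(x in cube a b) (sqnorm (@netN R l p L'.+1 (colv x) - f x))%:E)%E.
  by move=> p; apply: integral_ge0 => x _; rewrite lee_fin; apply: sumr_ge0 => i _; exact: sqr_ge0.
move: Hle; rewrite (fin0 Iv (I0 _) Hfv) (fin0 Iw (I0 _) Hfw) (fin0 Il (I0 _) Hfl).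
by rewrite -!EFinM -EFinD lee_fin.
Qed.
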